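(* For all positive integers $k$ and $n$, \[ \mathrm{LT}(k,n)\geq 3^{-4/3}k^{-2/3}n-3^{-1/3}k^{1/3}. \]
   Context: For a positive integer $k$ let $[k]=\{1,\dots,k\}$. A subsequence of a word $w\in[k]^n$ is a word formed by letters of $w$ at positions $i_1<\dots<i_m$. Two subsequences of $w$ are called twins if they are equal as words and no position of $w$ is used in both. $\mathrm{LT}(w)$ is the maximum length of twins in $w$, and $\mathrm{LT}(k,n)=\min_{w\in[k]^n}\mathrm{LT}(w)$. *)

(* Defs.v *)
From mathcomp Require Import all_boot.
Set Implicit Arguments. Unset Strict Implicit. Unset Printing Implicit Defensive.

(* Two subsequences of w are given by selection masks m1, m2 (bit i set iff
   position i is used).  They are twins if they are equal as words and no
   position is used by both. *)
Definition twinsb (T : eqType) (w : seq T) (m1 m2 : (size w).-tuple bool) : bool :=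
  [forall i : 'I_(size w), ~~ (tnth m1 i && tnth m2 i)] && (mask m1 w == mask m2 w).

Arguments twinsb {T} w m1 m2.

Definition LT (T : eqType) (w : seq T) : nat :=
  \max_(m1 : (size w).-tuple bool)
    \max_(m2 : (size w).-tuple bool | twinsb w m1 m2) size (mask m1 w).

(* LT(k,n) = min over words w in [k]^n of LT(w); the alphabet [k] is
   represented by 'I_k = {0,...,k-1} (a relabelling).  The default value n of
   the minimum is irrelevant since LT(w) <= n and the index type is nonempty
   for k >= 1. *)
Definition LTkn (k n : nat) : nat :=
  \big[minn/n]_(w : n.-tuple 'I_k) LT (tval w).

(* Main.v *)
Require Import Defs.
From mathcomp Require Import all_boot zify.
From Stdlib Require Import Lia.
Set Implicit Arguments. Unset Strict Implicit. Unset Printing Implicit Defensive.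

(* Proof (Bukh--Zhou style): split w into blocks of length 3k; in each block
   there are >= k/3 disjoint monochromatic triples; Erdos--Szekeres applied
   twice yields twins of length t with k <= 3 t^3; concatenate blocks. *)

Section Gen.
Variable X : eqType.

Lemma pairwise_rev (r : rel X) s :
  pairwise r (rev s) = pairwise (fun x y => r y x) s.
Proof.
elim: s => //= x s IH; rewrite rev_cons pairwise_rcons IH all_rev; done.
Qed.

Lemma perm_pairwise_sym (r : rel X) s t :
  symmetric r -> perm_eq s t -> pairwise r s -> pairwise r t.
Proof.
move=> rs; elim: s t => [|x s IH] t.
  by move/perm_size; case: t.
move=> pst /= /andP[ax ps].
have xt : x \in t by rewrite -(perm_mem pst) mem_head.
case/splitPr: xt pst => t1 t2 pst.
have p2 : perm_eq s (t1 ++ t2).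
  by rewrite -(perm_cons x); apply: (perm_trans pst); rewrite -[x :: t2]cat1s perm_catCA.
have := IH _ p2 ps; rewrite pairwise_cat => /and3P[a12 p1 p2'].
have ms : forall y, y \in t1 ++ t2 -> y \in s by move=> y; rewrite (perm_mem p2).
rewrite pairwise_cat /= p1 p2' andbT.
apply/andP; split.
  apply/allrelP => a b at1; rewrite inE => /predU1P[->|bt2].
    by rewrite rs; apply: (allP ax); apply: ms; rewrite mem_cat at1.
  by apply: (allrelP a12).
by apply/allP => y yt2; apply: (allP ax); apply: ms; rewrite mem_cat yt2 orbT.
Qed.

Variables (r1 r2 : rel X).
Hypothesis r1t : transitive r1.

Fixpoint labs (s : seq X) : seq nat :=
  if s is x :: s' then
    (\max_(j <- zip s' (labs s') | r1 x j.1) j.2).+1 :: labs s'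
  else [::].

Lemma size_labs s : size (labs s) = size s.
Proof. by elim: s => //= x s ->. Qed.

Lemma labs_pos s : all (fun l => 0 < l) (labs s).
Proof. by elim: s => //= x s ->. Qed.

Definition chainQ (s : seq X) v := exists c, [/\ subseq c s, pairwise r1 c & size c = v].

Lemma labs_chain s : forall j, j \in zip s (labs s) ->
  exists c, [/\ subseq (j.1 :: c) s, pairwise r1 (j.1 :: c) & (size c).+1 = j.2].
Proof.
elim: s => [|x s IH] j //.
rewrite [zip _ _]/= inE => /predU1P[->|js]; last first.
  have [c [h1 h2 h3]] := IH j js.
  by exists c; split => //; apply: (subseq_trans h1); apply: subseq_cons.
set M := \max_(_ <- _ | _) _.
suff [c [h1 h2 h3 h4]] : exists c, [/\ subseq c s, pairwise r1 c, all (r1 x) c & size c = M].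
  by exists c; split => //=; [rewrite eqxx | rewrite h3 h2 | rewrite h4].
rewrite /M big_seq_cond; apply: (big_ind (fun v => exists c, [/\ subseq c s, pairwise r1 c, all (r1 x) c & size c = v])).
- by exists [::]; split => //; apply: sub0seq.
- move=> a b [ca [? ? ? ?]] [cb [? ? ? ?]].
  by case: (leqP a b) => ab; [exists cb | exists ca].
move=> i /andP[ii rxi]; have [c [h1 h2 h3]] := IH i ii.
exists (i.1 :: c); split => //.
rewrite /= rxi /=; apply/allP => z zc.
by apply: (r1t rxi); move: h2 => /= /andP[/allP H _]; apply: H.
Qed.

Definition cls v s := [seq j.1 | j <- zip s (labs s) & j.2 == v].

Lemma zip_mem1 (s : seq X) (t : seq nat) j : size s <= size t -> j \in zip s t -> j.1 \in s.
Proof. by move=> st jz; rewrite -(unzip1_zip st); apply: map_f. Qed.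

Lemma zip_mem2 (s : seq X) (t : seq nat) j : size t <= size s -> j \in zip s t -> j.2 \in t.
Proof. by move=> st jz; rewrite -(unzip2_zip st); apply: map_f. Qed.

Lemma cls_sub v s : subseq (cls v s) s.
Proof.
elim: s => // x s IH; rewrite {1}/cls [zip _ _]/= [filter _ _]/=; case: ifP => _.
  by rewrite map_cons /= eqxx.
exact: (subseq_trans IH (subseq_cons s x)).
Qed.

Lemma cls_pw v s : pairwise (fun x y => r1 x y || r2 x y) s -> pairwise r2 (cls v s).
Proof.
elim: s => //= x s IH /andP[ax ps]; rewrite /cls /=.
case: ifP => [/eqP hv|_]; last exact: IH.
rewrite /= (IH ps) andbT; apply/allP => y /mapP[j]; rewrite mem_filter => /andP[/eqP jv jz] ->.
have js : j.1 \in s by apply: zip_mem1 jz; rewrite size_labs.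
have := allP ax _ js; case/orP => // rxj.
have := @leq_bigmax_seq _ _ (fun j => r1 x j.1) (fun j => j.2) j jz rxj.
by rewrite jv -hv ltnn.
Qed.

Lemma sum_count_eq N (t : seq (X * nat)) : all (fun j => j.2 < N) t ->
  \sum_(v < N) count (fun j => j.2 == (v : nat)) t = size t.
Proof.
elim: t => [|j t IH] /=; first by rewrite big1.
case/andP => jN aN; rewrite big_split /= IH // -add1n; congr addn.
rewrite (bigD1 (Ordinal jN)) //= eqxx big1 // => i ine.
by rewrite eq_sym; case: eqP => // h; move: ine; rewrite -(inj_eq val_inj) /= h eqxx.
Qed.

Lemma ES s : pairwise (fun x y => r1 x y || r2 x y) s ->
  exists s1 s2, [/\ subseq s1 s, pairwise r1 s1, subseq s2 s, pairwise r2 s2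
                  & size s <= size s1 * size s2].
Proof.
move=> ps.
set M := \max_(j <- zip s (labs s)) j.2.
have [s1 [h11 h12 h13]] : exists c, [/\ subseq c s, pairwise r1 c & M <= size c].
  rewrite /M big_seq; apply: (big_ind (fun v => exists c, [/\ subseq c s, pairwise r1 c & v <= size c])).
  - by exists [::]; split => //; apply: sub0seq.
  - move=> a b [ca [? ? ?]] [cb [? ? ?]].
    by case: (leqP a b) => ab; [exists cb | exists ca].
  move=> j jz; have [c [h1 h2 h3]] := labs_chain jz.
  by exists (j.1 :: c); split => //=; rewrite h3.
pose v0 := [arg max_(v > (ord0 : 'I_M.+1)) size (cls v s)].
have hv0 : forall v : 'I_M.+1, size (cls v s) <= size (cls v0 s).
  by rewrite /v0; case: arg_maxnP => // i _ H v; apply: H.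
exists s1, (cls v0 s); split => //; [exact: cls_sub | exact: cls_pw |].
have -> : size s = \sum_(v < M.+1) size (cls v s).
 have <- : size (zip s (labs s)) = size s by rewrite size_zip size_labs minnn.
  rewrite -(sum_count_eq (N := M.+1)); last first.
    by apply/allP => j jz; rewrite ltnS; apply: (@leq_bigmax_seq _ _ predT (fun j => j.2) j jz).
  by apply: eq_bigr => v _; rewrite size_map size_filter.
rewrite big_ord_recl.
have -> : size (cls (ord0 : 'I_M.+1) s) = 0.
  rewrite size_map size_filter; apply/eqP; rewrite -leqn0 leqNgt -has_count.
  apply/negP => /hasP[j jz /eqP j0].
  have jl : j.2 \in labs s by apply: (zip_mem2 _ jz); rewrite size_labs.
  by have := allP (labs_pos s) _ jl; rewrite j0.
rewrite add0n; apply: (@leq_trans (\sum_(i < M) size (cls v0 s))); first by apply: leq_sum => i _; exact: hv0.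
by rewrite sum_nat_const card_ord leq_mul2r h13 orbT.
Qed.
End Gen.

Section Twins.
Variables (T : eqType) (x0 : T).

Definition good (u : seq T) (Z : seq (nat * nat)) :=
  all (fun a => [&& a.1 < size u, a.2 < size u, a.1 != a.2 & nth x0 u a.1 == nth x0 u a.2]) Z &&
  pairwise (fun a b => [&& a.1 < b.1, a.2 < b.2, a.1 != b.2 & a.2 != b.1]) Z.

Lemma maskI (u : seq T) j (I : seq nat) : pairwise ltn I ->
  all (fun i => j <= i < j + size u) I ->
  mask [seq i \in I | i <- iota j (size u)] u = [seq nth x0 u (i - j) | i <- I].
Proof.
elim: u j I => [|x u IH] j I pI.
  by case: I pI => //= i I _; rewrite addn0 => /andP[/andP[h1 h2] _]; move: h2; rewrite ltnNge h1.
case: I pI => [|i I] pI aI.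
  by rewrite /= (IH j.+1 [::]).
have [eij|nij] := eqVneq i j.
  rewrite eij in pI aI *.
  rewrite /= mem_head /= subnn /=; congr cons.
  move: pI => /= /andP[aj pI]; move: aI => /= /andP[_ aI].
  have aI' : all (fun i0 => j.+1 <= i0 < j.+1 + size u) I.
    apply/allP => z zI; have := allP aI z zI; have := allP aj z zI.
    by move=> /= -> /andP[_]; rewrite addSnnS.
  have -> : [seq i0 \in j :: I | i0 <- iota j.+1 (size u)] = [seq i0 \in I | i0 <- iota j.+1 (size u)].
    apply/eq_in_map => z; rewrite mem_iota inE => /andP[jz _].
    by rewrite (gtn_eqF jz).
  rewrite (IH j.+1 I pI aI'); apply/eq_in_map => z zI /=.
  by have := allP aj z zI => /= jz; rewrite -(subnSK jz).
have ji : j < i.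
  by move: aI => /= /andP[/andP[h _] _]; rewrite ltn_neqAle eq_sym nij h.
have jI : j \notin i :: I.
  rewrite inE negb_or eq_sym nij /=; apply/negP => jI.
  by move: pI => /= /andP[/allP /(_ j jI) ij _]; move: (ltn_trans ij ji); rewrite ltnn.
rewrite /= (negbTE jI) /=.
have aI' : all (fun i0 => j.+1 <= i0 < j.+1 + size u) (i :: I).
  apply/allP => z zI; have /andP[h1 h2] := allP aI z zI; move: h2 => /= h2.
  rewrite addSnnS h2 andbT ltn_neqAle h1 andbT; apply/negP => /eqP ejz.
  by move: jI; rewrite ejz zI.
rewrite (IH j.+1 _ pI aI'); apply/eq_in_map => z zI.
have jz : j < z by move: (allP aI' z zI) => /andP[h _].
by rewrite -(subnSK jz).
Qed.


Lemma good_disj u Z : good u Z -> forall x, x \in map fst Z -> x \in map snd Z -> False.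
Proof.
case/andP=> aZ pZ; elim: Z aZ pZ => [_ _ x //|a Z IH] /= /andP[ha aZ] /andP[pa pZ] x.
rewrite !inE => /predU1P[xa|xI] /predU1P[xb|xJ].
- by move: ha; rewrite -xa -xb eqxx => /and4P[].
- case/mapP: xJ => b bZ xb; have := allP pa b bZ; rewrite -xa -xb.
  by case/and4P => _ _ /eqP.
- case/mapP: xI => b bZ ya; have := allP pa b bZ; rewrite -ya -xb.
  by case/and4P => _ _ _ /eqP.
exact: IH aZ pZ x xI xJ.
Qed.

Lemma twins_LT u Z : good u Z -> size Z <= LT u.
Proof.
move=> gZ; have gZ' := gZ; case/andP: gZ' => aZ pZ.
pose I := map fst Z; pose J := map snd Z.
have pI : pairwise ltn I.
  by rewrite pairwise_map; apply: sub_pairwise pZ => a b /and4P[].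
have pJ : pairwise ltn J.
  by rewrite pairwise_map; apply: sub_pairwise pZ => a b /and4P[].
have aI : all (fun i => 0 <= i < 0 + size u) I.
  by rewrite all_map; apply: sub_all aZ => a /and4P[].
have aJ : all (fun i => 0 <= i < 0 + size u) J.
  by rewrite all_map; apply: sub_all aZ => a /and4P[].
pose m1 : (size u).-tuple bool := Tuple (introT eqP (size_mkseq (fun i => i \in I) (size u))).
pose m2 : (size u).-tuple bool := Tuple (introT eqP (size_mkseq (fun i => i \in J) (size u))).
have e1 : mask m1 u = map (nth x0 u) I.
  by rewrite /= /mkseq maskI //; apply/eq_map => i; rewrite subn0.
have e2 : mask m2 u = map (nth x0 u) J.
  by rewrite /= /mkseq maskI //; apply/eq_map => i; rewrite subn0.
have tw : twinsb u m1 m2.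
  apply/andP; split.
    apply/forallP => i; rewrite !(tnth_nth false) /= !nth_mkseq //.
    by apply/negP => /andP[h1 h2]; apply: (good_disj gZ h1 h2).
  rewrite e1 e2 -!map_comp; apply/eqP/eq_in_map => a aZ'.
  by have /and4P[_ _ _ /eqP] := allP aZ a aZ'.
apply: (leq_trans _ (leq_bigmax m1)).
apply: (leq_trans _ (@leq_bigmax_cond _ (fun m => twinsb u m1 m) (fun m => size (mask m1 u)) m2 tw)).
by rewrite e1 !size_map.
Qed.

Lemma good_cat u v Z1 Z2 : good u Z1 -> good v Z2 ->
  good (u ++ v) (Z1 ++ map (fun a => (a.1 + size u, a.2 + size u)) Z2).
Proof.
case/andP => a1 p1; case/andP => a2 p2; apply/andP; split.
  rewrite all_cat all_map; apply/andP; split.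
    apply: sub_all a1 => a /and4P[h1 h2 h3 h4].
    by rewrite size_cat !ltn_addr // !nth_cat h1 h2 h3 h4.
  apply: sub_all a2 => a /and4P[h1 h2 h3 h4] /=.
  rewrite !nth_cat size_cat !ltnNge !leq_addl /= !addnK eqn_add2r h3 h4.
  by rewrite -!ltnNge [size u + _]addnC !ltn_add2r h1 h2.
rewrite pairwise_cat p1 pairwise_map /=; apply/andP; split; last first.
  by apply: sub_pairwise p2 => a b /=; rewrite !ltn_add2r !eqn_add2r.
apply/allrelP => a b aZ /mapP[c cZ ->] /=.
have /and4P[h1 h2 _ _] := allP a1 a aZ.
have lt1 : forall z, z < size u -> z < c.1 + size u by move=> z h; apply: (leq_trans h); rewrite leq_addl.
have lt2 : forall z, z < size u -> z < c.2 + size u by move=> z h; apply: (leq_trans h); rewrite leq_addl.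
by rewrite lt1 // lt2 // !neq_ltn lt2 // lt1.
Qed.

End Twins.

Section Triples.
Variables (T : eqType) (x0 : T) (u : seq T).

Definition trip := (nat * nat * nat)%type.
Definition pos (t : trip) : seq nat := [:: t.1.1; t.1.2; t.2].
Definition tdisj (t t' : trip) := ~~ has (mem (pos t')) (pos t).
Definition tripOK (t : trip) :=
  [&& t.1.1 < t.1.2, t.1.2 < t.2, t.2 < size u,
      nth x0 u t.1.1 == nth x0 u t.1.2 & nth x0 u t.1.2 == nth x0 u t.2].

Lemma tdisj_sym : symmetric tdisj.
Proof. by move=> x y; rewrite /tdisj has_sym. Qed.

Lemma tdisjP x y i j : tdisj x y -> i \in pos x -> j \in pos y -> i != j.
Proof.
move=> d ix jy; apply/negP => /eqP eij; move/negP: d; apply.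
by apply/hasP; exists i => //; rewrite eij.
Qed.

Lemma extract (f g : trip -> nat) (s : seq trip) :
  (forall t, f t \in pos t) -> (forall t, g t \in pos t) ->
  (forall t, tripOK t -> [&& f t < size u, g t < size u, f t != g t & nth x0 u (f t) == nth x0 u (g t)]) ->
  all tripOK s ->
  pairwise (fun x y => [&& tdisj x y, f x < f y & g x < g y]) s ->
  good x0 u (map (fun t => (f t, g t)) s).
Proof.
move=> Hf Hg H aS pS; apply/andP; split.
  by rewrite all_map; apply: sub_all aS => t /H.
rewrite pairwise_map; apply: sub_pairwise pS => x y /and3P[d h1 h2] /=.
by rewrite h1 h2 (tdisjP d (Hf x) (Hg y)) (tdisjP d (Hg x) (Hf y)).
Qed.


Lemma pw2 (X : Type) (ra rb rc : rel X) s :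
  pairwise ra s -> pairwise rb s -> (forall x y, ra x y -> rb x y -> rc x y) -> pairwise rc s.
Proof.
move=> pa pb H; have : pairwise [rel x y | ra x y && rb x y] s by rewrite pairwise_relI pa pb.
by apply: sub_pairwise => x y /andP[]; apply: H.
Qed.

Lemma tdisj_neq x y : tdisj x y -> [&& x.1.1 != y.1.1, x.1.2 != y.1.2 & x.2 != y.2].
Proof.
by move=> d; rewrite !(tdisjP d) // /pos !inE eqxx ?orbT.
Qed.

Lemma trip_twins s : all tripOK s -> pairwise tdisj s ->
  exists Z, good x0 u Z /\ size s <= size Z * size Z * size Z.
Proof.
move=> aS pS.
pose s' := sort (fun x y : trip => x.1.1 <= y.1.1) s.
have ps' : perm_eq s s' by rewrite perm_sym; apply/permPl; apply: perm_sort.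
have aS' : all tripOK s' by rewrite -(perm_all _ ps').
have pS' : pairwise tdisj s' by apply: (perm_pairwise_sym tdisj_sym ps').
have srt : pairwise (fun x y : trip => x.1.1 <= y.1.1) s'.
  rewrite -sorted_pairwise; first by apply: sort_sorted => x y; apply: leq_total.
  by move=> a b c; apply: leq_trans.
pose base := fun x y : trip => tdisj x y && (x.1.1 < y.1.1).
have pB : pairwise base s'.
  have := pS'; rewrite -[pairwise tdisj _]andbT -srt -pairwise_relI.
  apply: sub_pairwise => x y /= /andP[d le].
  by rewrite /base d ltn_neqAle le andbT; case/and3P: (tdisj_neq d).
have q12 : pairwise (fun x y : trip => (x.1.2 < y.1.2) || (y.1.2 < x.1.2)) s'.
  apply: sub_pairwise pS' => x y /tdisj_neq /and3P[_ h _].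
  by rewrite -neq_ltn.
have [s1 [s2 [h11 h12 h21 h22 hs12]]] := @ES _ (fun x y : trip => x.1.2 < y.1.2) _ (fun b a c => @ltn_trans b.1.2 a.1.2 c.1.2) _ q12.
have r34 : pairwise (fun x y : trip => (x.2 < y.2) || (y.2 < x.2)) s2.
  apply: sub_pairwise (subseq_pairwise h21 pS') => x y /tdisj_neq /and3P[_ _ h].
  by rewrite -neq_ltn.
have [s3 [s4 [h31 h32 h41 h42 hs34]]] := @ES _ (fun x y : trip => x.2 < y.2) _ (fun b a c => @ltn_trans b.2 a.2 c.2) _ r34.
have Z1 : good x0 u (map (fun t : trip => (t.1.1, t.1.2)) s1).
  apply: extract.
  - by move=> t; rewrite !inE eqxx ?orbT.
  - by move=> t; rewrite !inE eqxx ?orbT.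
  - by move=> t /and5P[a b c d e]; rewrite (ltn_trans a (ltn_trans b c)) (ltn_trans b c) (ltn_eqF a) d.
  - by apply/allP => t ts; apply: (allP aS'); apply: (mem_subseq h11).
  apply: (pw2 (subseq_pairwise h11 pB) h12) => x y /andP[-> ->] ->.
  done.
have Z3 : good x0 u (map (fun t : trip => (t.1.1, t.2)) s3).
  have h3 := subseq_trans h31 h21.
  apply: extract.
  - by move=> t; rewrite !inE eqxx ?orbT.
  - by move=> t; rewrite !inE eqxx ?orbT.
  - move=> t /and5P[a b c d e]; rewrite (ltn_trans a (ltn_trans b c)) c (ltn_eqF (ltn_trans a b)).
    by rewrite (eqP d) e.
  - by apply/allP => t ts; apply: (allP aS'); apply: (mem_subseq h3).
  by apply: (pw2 (subseq_pairwise h3 pB) h32) => x y /andP[-> ->] ->.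
have Z4 : good x0 u (map (fun t : trip => (t.1.2, t.2)) (rev s4)).
  have h4 := subseq_trans h41 h21.
  apply: extract.
  - by move=> t; rewrite !inE eqxx ?orbT.
  - by move=> t; rewrite !inE eqxx ?orbT.
  - by move=> t /and5P[a b c d e]; rewrite (ltn_trans b c) c (ltn_eqF b) e.
  - by rewrite all_rev; apply/allP => t ts; apply: (allP aS'); apply: (mem_subseq h4).
  rewrite pairwise_rev.
  have P1 : pairwise (fun x y => tdisj x y && (y.1.2 < x.1.2)) s4.
    by apply: (pw2 (subseq_pairwise h4 pS') (subseq_pairwise h41 h22)) => x y -> ->.
  by apply: (pw2 P1 h42) => x y /andP[d h1] h2; rewrite tdisj_sym d h1 h2.
have hs : size s <= size s1 * (size s3 * size s4).
  rewrite (perm_size ps'); apply: (leq_trans hs12); rewrite leq_mul2l hs34 orbT //.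
set a := size s1 in hs; set b := size s3 in hs; set c := size s4 in hs.
have Hm : forall m, a <= m -> b <= m -> c <= m -> size s <= m * m * m.
  move=> m am bm cm; apply: (leq_trans hs); rewrite -mulnA.
  by apply: leq_mul => //; apply: leq_mul.
have Z1s : size (map (fun t : trip => (t.1.1, t.1.2)) s1) = a by rewrite size_map.
have Z3s : size (map (fun t : trip => (t.1.1, t.2)) s3) = b by rewrite size_map.
have Z4s : size (map (fun t : trip => (t.1.2, t.2)) (rev s4)) = c by rewrite size_map size_rev.
case: (leqP b a) => ba; case: (leqP c a) => ca.
- by exists (map (fun t : trip => (t.1.1, t.1.2)) s1); rewrite Z1s; split => //; apply: Hm.
- exists (map (fun t : trip => (t.1.2, t.2)) (rev s4)); rewrite Z4s; split => //.
  by apply: Hm => //; [apply: ltnW | apply: (leq_trans ba); apply: ltnW].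
- exists (map (fun t : trip => (t.1.1, t.2)) s3); rewrite Z3s; split => //.
  by apply: Hm => //; [apply: ltnW | apply: (leq_trans ca); apply: ltnW].
case: (leqP c b) => cb.
  exists (map (fun t : trip => (t.1.1, t.2)) s3); rewrite Z3s; split => //.
  by apply: Hm => //; apply: ltnW.
exists (map (fun t : trip => (t.1.2, t.2)) (rev s4)); rewrite Z4s; split => //.
by apply: Hm => //; apply: ltnW => //; apply: (ltn_trans ba cb).
Qed.
End Triples.

Fixpoint chunk (l : seq nat) : seq trip :=
  if l is a :: l1 then
    if l1 is b :: l2 then
      if l2 is c :: l3 then ((a, b), c) :: chunk l3 else [::]
    else [::]
  else [::].

Lemma chunk_ind (P : seq nat -> Prop) : P [::] -> (forall a, P [:: a]) -> (forall a b, P [:: a; b]) ->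
  (forall a b c l, P l -> P [:: a, b, c & l]) -> forall l, P l.
Proof.
move=> H0 H1 H2 H3 l; have [n] := ubnP (size l); elim: n l => // n IH [|a [|b [|c l]]] //= hs.
by apply: H3; apply: IH; rewrite ltnS in hs; apply: (leq_trans _ hs); rewrite ltnS leqW // leqW.
Qed.

Lemma chunk_size l : size l <= 3 * size (chunk l) + 2.
Proof.
elim/chunk_ind: l => //= a b c l IH.
by rewrite mulnS -addnA addnC addn3 !ltnS.
Qed.

Lemma chunk_mem l t : t \in chunk l -> all (fun i => i \in l) (pos t).
Proof.
elim/chunk_ind: l => // a b c l IH; rewrite [chunk _]/= inE => /predU1P[et|tl].
  by rewrite et /= !inE !eqxx !orbT.
by apply/allP => i it; rewrite !inE (allP (IH tl) i it) !orbT.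
Qed.

Lemma chunk_ok l : pairwise ltn l -> all (fun t => (t.1.1 < t.1.2) && (t.1.2 < t.2)) (chunk l).
Proof.
elim/chunk_ind: l => //= a b c l IH /andP[/and3P[ab ac _] /andP[/andP[bc _] /andP[_ pl]]].
by rewrite ab bc IH.
Qed.

Lemma chunk_disj l : pairwise ltn l -> pairwise tdisj (chunk l).
Proof.
elim/chunk_ind: l => //= a b c l IH /andP[/and3P[ab ac al] /andP[/andP[bc bl] /andP[cl pl]]].
rewrite IH // andbT; apply/allP => t tl; rewrite /tdisj; apply/hasP => -[i iabc it]; move: iabc.
have := allP (chunk_mem tl) i it => il.
rewrite !inE => /or3P[] /eqP ei; rewrite ei in il.
- by have := allP al _ il; rewrite /ltn /= ltnn.
- by have := allP bl _ il; rewrite /ltn /= ltnn.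
- by have := allP cl _ il; rewrite /ltn /= ltnn.
Qed.

Section Occ.
Variables (T : eqType) (x0 : T) (u : seq T).

Definition occ a := [seq i <- iota 0 (size u) | nth x0 u i == a].

Lemma occ_pw a : pairwise ltn (occ a).
Proof.
by apply: pairwise_filter; rewrite -(sorted_pairwise ltn_trans); apply: iota_ltn_sorted.
Qed.

Lemma occ_mem a i : i \in occ a -> (i < size u) && (nth x0 u i == a).
Proof. by rewrite mem_filter mem_iota add0n andbC. Qed.

Lemma occ_size a : size (occ a) = count (pred1 a) u.
Proof.
by rewrite size_filter -[in RHS](mkseq_nth x0 u) /mkseq count_map.
Qed.

Fixpoint SL (L : seq T) : seq trip :=
  if L is a :: L' then chunk (occ a) ++ SL L' else [::].

Lemma chunk_occ a t : t \in chunk (occ a) -> tripOK x0 u t /\ all (fun i => nth x0 u i == a) (pos t).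
Proof.
move=> tc; have /andP[h1 h2] := allP (chunk_ok (occ_pw a)) t tc.
have am := chunk_mem tc.
have m1 : t.1.1 \in occ a by apply: (allP am); rewrite !inE eqxx.
have m2 : t.1.2 \in occ a by apply: (allP am); rewrite !inE eqxx orbT.
have m3 : t.2 \in occ a by apply: (allP am); rewrite !inE eqxx !orbT.
move/occ_mem: m1; move/occ_mem: m2; move/occ_mem: m3 => m3 m2 m1.
case/andP: m1 => _ /eqP e1; case/andP: m2 => _ /eqP e2; case/andP: m3 => s3 /eqP e3.
split; first by rewrite /tripOK h1 h2 s3 e1 e2 e3 eqxx.
by rewrite /= e1 e2 e3 eqxx.
Qed.

Lemma SL_props L : uniq L ->
  [/\ all (tripOK x0 u) (SL L), pairwise tdisj (SL L),
      (forall t, t \in SL L -> all (fun i => nth x0 u i \in L) (pos t))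
    & count (mem L) u <= 3 * size (SL L) + 2 * size L].
Proof.
elim: L => [|a L IH]; first by split => //; rewrite count_pred0.
rewrite [SL _]/=; case/andP => aL uL; have [h1 h2 h3 h4] := IH uL.
split.
- rewrite all_cat h1 andbT; apply/allP => t tc; exact: (chunk_occ tc).1.
- rewrite pairwise_cat h2 chunk_disj ?occ_pw // !andbT; apply/allrelP => t t' tc tS.
  rewrite /tdisj; apply/hasP => -[i it it'].
  have := allP (chunk_occ tc).2 i it => /eqP ea.
  have := allP (h3 t' tS) i it'; rewrite ea => aL'.
  by move: aL; rewrite aL'.
- move=> t; rewrite mem_cat => /orP[tc|tS]; apply/allP => i it.
    by have := allP (chunk_occ tc).2 i it => /eqP ->; rewrite mem_head.
  by rewrite inE (allP (h3 t tS) i it) orbT.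
have -> : count (mem (a :: L)) u = count (pred1 a) u + count (mem L) u.
  have e1 : count (predI (pred1 a) (mem L)) u = 0.
    rewrite (@eq_count _ _ pred0) ?count_pred0 // => x /=.
    by apply/negP => /andP[/eqP -> ]; rewrite (negbTE aL).
  have e2 : count (mem (a :: L)) u = count (predU (pred1 a) (mem L)) u.
    by apply: eq_count => x; rewrite /= inE.
  by rewrite e2 -count_predUI e1 addn0.
rewrite -occ_size size_cat mulnDr.
have := chunk_size (occ a).
move: (size (occ a)) (size (chunk (occ a))) h4 => o c h4 ho.
rewrite [size (a :: L)]/=; move: (size (SL L)) (size L) h4 => S0 L0 h4.
lia.
Qed.
End Occ.

Lemma block (k : nat) (x0 : 'I_k) (u : seq 'I_k) : size u = 3 * k ->
  exists Z, good x0 u Z /\ k <= 3 * (size Z * size Z * size Z).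
Proof.
move=> su.
have [h1 h2 _ h4] := SL_props x0 u (enum_uniq 'I_k).
have [Z [gZ hZ]] := trip_twins h1 h2.
exists Z; split => //.
have ec : count (mem (enum 'I_k)) u = size u.
  by rewrite -(count_predT u); apply: eq_count => x; rewrite /= mem_enum.
move: h4; rewrite size_enum_ord ec su => h4; apply: (leq_trans _ (leq_mul (leqnn 3) hZ)).
by move: h4; rewrite mulSn leq_add2r.
Qed.

Lemma whole (k : nat) (x0 : 'I_k) (t0 : nat) : 0 < k ->
  (forall Z : seq (nat * nat), k <= 3 * (size Z * size Z * size Z) -> t0 <= size Z) ->
  forall w : seq 'I_k, exists Z, good x0 w Z /\ (size w %/ (3 * k)) * t0 <= size Z.
Proof.
move=> kp ht w; have [n] := ubnP (size w); elim: n w => // n IH w sw.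
have k3 : 0 < 3 * k by rewrite muln_gt0.
case: (ltnP (size w) (3 * k)) => hw.
  by exists [::]; split => //; rewrite divn_small.
rewrite -(cat_take_drop (3 * k) w).
have st : size (take (3 * k) w) = 3 * k by rewrite size_take_min; apply/minn_idPl.
have [Z1 [g1 s1]] := block x0 st.
have sd : size (drop (3 * k) w) < n.
  by rewrite size_drop; rewrite ltnS in sw; apply: leq_trans sw; rewrite ltn_subrL k3 (leq_trans k3 hw).
have [Z2 [g2 s2]] := IH _ sd.
exists (Z1 ++ map (fun a => (a.1 + size (take (3 * k) w), a.2 + size (take (3 * k) w))) Z2).
split; first exact: good_cat.
rewrite cat_take_drop size_cat size_map.
have -> : size w = size (drop (3 * k) w) + 1 * (3 * k) by rewrite size_drop mul1n subnK.
rewrite divnDMl // mulnDl mul1n addnC; apply: leq_add => //.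
exact: ht.
Qed.

Lemma LTkn_lb (k n t0 : nat) : 0 < k -> t0 <= k ->
  (forall Z : seq (nat * nat), k <= 3 * (size Z * size Z * size Z) -> t0 <= size Z) ->
  (n %/ (3 * k)) * t0 <= LTkn k n.
Proof.
move=> kp tk ht; rewrite /LTkn; apply: (big_ind (fun x => n %/ (3 * k) * t0 <= x)).
- apply: (leq_trans (leq_mul (leqnn _) tk)).
  apply: (leq_trans _ (leq_trunc_div n (3 * k))).
  by rewrite leq_mul2l leq_pmull ?orbT.
- by move=> a b ha hb; rewrite leq_min ha hb.
move=> w _; have x0 : 'I_k := Ordinal kp.
have [Z [gZ hZ]] := whole x0 kp ht w.
rewrite size_tuple in hZ; apply: (leq_trans hZ); exact: twins_LT gZ.
Qed.

From Stdlib Require Import Reals Lra Psatz.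

Lemma real_part (k n q t0 : nat) : (0 < k)%N ->
  (k <= 3 * (t0 * t0 * t0))%N -> (n < (q.+1) * (3 * k))%N ->
  (Rpower 3 (-4/3) * Rpower (INR k) (-2/3) * INR n
     - Rpower 3 (-1/3) * Rpower (INR k) (1/3) <= INR q * INR t0)%R.
Proof.
move=> kp kt nq.
have kR : (0 < INR k)%R by apply: lt_0_INR; apply/ltP.
have ktR : (INR k <= 3 * (INR t0 * INR t0 * INR t0))%R.
  have := le_INR _ _ (elimT leP kt); rewrite !mult_INR.
  have -> : INR 3 = 3%R by simpl; lra.
  done.
have nqR : (INR n < (INR q + 1) * (3 * INR k))%R.
  have := lt_INR _ _ (elimT ltP nq); rewrite !mult_INR S_INR.
  have -> : INR 3 = 3%R by simpl; lra.
  done.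
set a := Rpower 3 (-1/3); set b := Rpower (INR k) (1/3).
have a0 : (0 < a)%R by apply: exp_pos.
have b0 : (0 < b)%R by apply: exp_pos.
have e1 : Rpower 3 (-4/3) = (a / 3)%R.
  rewrite /a (_ : (-4/3 = -1/3 + - 1)%R); last by lra.
  by rewrite Rpower_plus Rpower_Ropp Rpower_1; [lra | lra].
have e2 : Rpower (INR k) (-2/3) = (b / INR k)%R.
  rewrite /b (_ : (-2/3 = 1/3 + - 1)%R); last by lra.
  by rewrite Rpower_plus Rpower_Ropp Rpower_1 //; field; lra.
have a3 : (a ^ 3 = / 3)%R.
  rewrite -Rpower_pow // /a Rpower_mult (_ : (-1/3 * INR 3 = - 1)%R); last by simpl; lra.
  by rewrite Rpower_Ropp Rpower_1; lra.
have b3 : (b ^ 3 = INR k)%R.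
  rewrite -Rpower_pow // /b Rpower_mult (_ : (1/3 * INR 3 = 1)%R); last by simpl; lra.
  by rewrite Rpower_1.
have c3 : ((a * b) ^ 3 <= INR t0 ^ 3)%R.
  rewrite Rpow_mult_distr a3 b3 /=; lra.
have t00 : (0 <= INR t0)%R by apply: pos_INR.
have q0 : (0 <= INR q)%R by apply: pos_INR.
have ct : (a * b <= INR t0)%R.
  case: (Rle_lt_dec (a * b) (INR t0)) => // h.
  have ab0 : (0 < a * b)%R by apply: Rmult_lt_0_compat.
  move: c3; rewrite /= !Rmult_1_r.
  set c := (a * b)%R in h ab0 *.
  have h2 : (INR t0 * INR t0 <= c * c)%R by nra.
  have h3 : (INR t0 * (INR t0 * INR t0) <= INR t0 * (c * c))%R by apply: Rmult_le_compat_l.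
  have h4 : (INR t0 * (c * c) < c * (c * c))%R by apply: Rmult_lt_compat_r => //; nra.
  lra.
rewrite e1 e2.
have xq : (INR n / (3 * INR k) - 1 <= INR q)%R.
  apply: (Rmult_le_reg_r (3 * INR k)); first lra.
  rewrite Rmult_minus_distr_r /Rdiv Rmult_assoc Rinv_l; lra.
have -> : (a / 3 * (b / INR k) * INR n - a * b = (a * b) * (INR n / (3 * INR k) - 1))%R.
  by field; lra.
set x := (INR n / (3 * INR k) - 1)%R in xq *.
have ab0 : (0 <= a * b)%R by apply: Rlt_le; apply: Rmult_lt_0_compat.
case: (Rle_lt_dec x 0) => hx.
  have : (a * b * x <= 0)%R by nra.
  have : (0 <= INR q * INR t0)%R by apply: Rmult_le_pos.
  lra.
nra.
Qed.

Theorem theorem3 (k n : nat) : (0 < k)%N -> (0 < n)%N ->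
  (Rpower 3 (-4/3) * Rpower (INR k) (-2/3) * INR n
     - Rpower 3 (-1/3) * Rpower (INR k) (1/3) <= INR (LTkn k n))%R.
Proof.
move=> kp _.
have ex : exists t, (k <= 3 * (t * t * t))%N.
  exists k; rewrite -{1}(mul1n k) leq_mul // -mulnA -{1}(muln1 k) leq_mul //.
  by rewrite muln_gt0 kp.
case: (ex_minnP ex) => t0 kt tmin.
have tk : (t0 <= k)%N by apply: tmin; rewrite -{1}(mul1n k) leq_mul // -mulnA -{1}(muln1 k) leq_mul // muln_gt0 kp.
have ht : forall Z : seq (nat * nat), (k <= 3 * (size Z * size Z * size Z))%N -> (t0 <= size Z)%N.
  by move=> Z; apply: tmin.
have lb := LTkn_lb n kp tk ht.
apply: (Rle_trans _ _ _ (real_part (q := n %/ (3 * k)) kp kt (ltn_ceil _ _))).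
  by rewrite muln_gt0 kp.
by rewrite -mult_INR; apply: le_INR; apply/leP.
Qed.
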